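(* Let $G=(V,E)$ with weights $w^\pm$ be as in the context, and let $P_0,N_0\subseteq V$ be disjoint. The joint distribution of the pair (final +active set, final -active set) produced by the CLT process with seeds $(P_0,N_0)$ is identical to the joint distribution of the pair (set of +active nodes, set of -active nodes) defined by distances in the random live-path graph $G_X$.
   Context: Weights: $G=(V,E)$ finite directed graph, each edge $(u,v)$ has weights $w^+_{uv},w^-_{uv}\ge 0$, with $w^\pm_{uv}=0$ for non-edges and $\sum_u w^+_{uv}\le1$, $\sum_u w^-_{uv}\le 1$ for all $v$. Seeds $P_0,N_0$ are disjoint. CLT process (two independent LT diffusions with negative dominance). Each node $v$ draws $\theta^+_v,\theta^-_v$ independently and uniformly from $[0,1]$. The positive diffusion is the LT process $R^+_0=P_0$, $R^+_t=R^+_{t-1}\cup\{v:\sum_{u\in R^+_{t-1}}w^+_{uv}\ge\theta^+_v\}$, and $\tau^+(v)=\min\{t: v\in R^+_t\}$ ($=\infty$ if no such $t$). The negative diffusion is defined identically from $N_0$, $w^-$, $\theta^-$, giving $\tau^-(v)$. A node $v$ is finally -active iff $\tau^-(v)<\infty$ and $\tau^-(v)\le\tau^+(v)$, and finally +active iff $\tau^+(v)<\infty$ and $\tau^+(v)<\tau^-(v)$. Random live-path graph $G_X$: independently for each $v\in V$, select at most one positive in-edge, choosing $(u,v)$ with probability $w^+_{uv}$ and no positive in-edge with probability $1-\sum_u w^+_{uv}$; independently, select at most one negative in-edge in the same way using $w^-$. Let $G^+$ (resp. $G^-$) be the graph on $V$ with the selected positive (resp. negative) edges. For $A\subseteq V$,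 $d_{G^+}(A,v)$ is the length of a shortest directed path in $G^+$ from a node of $A$ to $v$ ($0$ if $v\in A$, $\infty$ if none); $d_{G^-}(A,v)$ similarly. In $G_X$, $v$ is +active iff $d_{G^+}(P_0,v)<\infty$ and $d_{G^+}(P_0,v)<d_{G^-}(N_0,v)$, and -active iff $d_{G^-}(N_0,v)<\infty$ and $d_{G^-}(N_0,v)\le d_{G^+}(P_0,v)$. *)

(* Defs.v *)
From mathcomp Require Import all_boot.
From Stdlib Require Import Reals ClassicalEpsilon.

Set Implicit Arguments.
Unset Strict Implicit.
Unset Printing Implicit Defensive.

Definition pb (P : Prop) : bool :=
  if excluded_middle_informative P then true else false.

Section Defs.
Variable V : finType.

Definition insum (w : V -> V -> R) (S : {set V}) (v : V) : R :=
  \big[Rplus/R0]_(u in S) w u v.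

Definition valid_weights (E : rel V) (w : V -> V -> R) : Prop :=
  (forall u v, (0 <= w u v)%R) /\
  (forall u v, ~~ E u v -> w u v = R0) /\
  (forall v, (insum w [set: V] v <= 1)%R).

Fixpoint lt_set (w : V -> V -> R) (theta : V -> R) (S0 : {set V}) (t : nat)
  : {set V} :=
  match t with
  | 0 => S0
  | t'.+1 =>
      let S := lt_set w theta S0 t' in
      S :|: [set v | if Rle_dec (theta v) (insum w S v) then true else false]
  end.

Definition tau_is w theta S0 (v : V) (t : nat) : Prop :=
  v \in lt_set w theta S0 t /\ forall s, (s < t)%N -> v \notin lt_set w theta S0 s.
Definition tau_inf w theta S0 (v : V) : Prop :=
  forall t, v \notin lt_set w theta S0 t.

Definition clt_plus (wp wn : V -> V -> R) (thp thn : V -> R) (P0 N0 : {set V})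
  (v : V) : Prop :=
  exists t, tau_is wp thp P0 v t /\
    (tau_inf wn thn N0 v \/ exists t', tau_is wn thn N0 v t' /\ (t < t')%N).
Definition clt_minus (wp wn : V -> V -> R) (thp thn : V -> R) (P0 N0 : {set V})
  (v : V) : Prop :=
  exists t', tau_is wn thn N0 v t' /\
    (tau_inf wp thp P0 v \/ exists t, tau_is wp thp P0 v t /\ (t' <= t)%N).

Definition clt_outcome wp wn thp thn P0 N0 (A B : {set V}) : Prop :=
  forall v, (v \in A <-> clt_plus wp wn thp thn P0 N0 v) /\
            (v \in B <-> clt_minus wp wn thp thn P0 N0 v).

(* ---------- Uniform thresholds: probability via Jordan content ----------
   The threshold vector (theta^+, theta^-) is uniform on [0,1]^(2|V|).
   The event {CLT outcome = (A,B)} is Jordan measurable, so its probability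
   is the limit of the fraction of points of the grid
   {1/k, 2/k, ..., k/k}^(2|V|) lying in it.  *)
Definition grid_pt (k : nat) (i : 'I_k) : R := (INR i.+1 / INR k)%R.

Definition clt_grid_freq wp wn P0 N0 (A B : {set V}) (k : nat) : R :=
  (INR #|[set th : {ffun V -> 'I_k.+1} * {ffun V -> 'I_k.+1} |
           pb (clt_outcome wp wn (fun v => grid_pt (th.1 v))
                                 (fun v => grid_pt (th.2 v)) P0 N0 A B)]|
   / (INR k.+1 ^ (2 * #|V|)))%R.

(* ---------- Live-path graph ----------
   sel v = Some u : the in-edge (u,v) is selected; None : no in-edge. *)
Definition sel_prob (w : V -> V -> R) (sel : {ffun V -> option V}) : R :=
  \big[Rmult/R1]_(v : V)
     match sel v with
     | Some u => w u v
     | None => (1 - insum w [set: V] v)%R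
     end.

Fixpoint path_len (sel : {ffun V -> option V}) (A : {set V}) (n : nat) (v : V)
  : Prop :=
  match n with
  | 0 => v \in A
  | n'.+1 => exists u, sel v = Some u /\ path_len sel A n' u
  end.

Definition dist_is sel A v d : Prop :=
  path_len sel A d v /\ forall d', (d' < d)%N -> ~ path_len sel A d' v.
Definition dist_inf sel A v : Prop := forall d, ~ path_len sel A d v.

Definition lp_plus (sp sn : {ffun V -> option V}) (P0 N0 : {set V}) v : Prop :=
  exists d, dist_is sp P0 v d /\
    (dist_inf sn N0 v \/ exists d', dist_is sn N0 v d' /\ (d < d')%N).
Definition lp_minus (sp sn : {ffun V -> option V}) (P0 N0 : {set V}) v : Prop :=
  exists d', dist_is sn N0 v d' /\
    (dist_inf sp P0 v \/ exists d, dist_is sp P0 v d /\ (d' <= d)%N).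

Definition lp_outcome sp sn P0 N0 (A B : {set V}) : Prop :=
  forall v, (v \in A <-> lp_plus sp sn P0 N0 v) /\
            (v \in B <-> lp_minus sp sn P0 N0 v).

Definition lp_prob wp wn P0 N0 (A B : {set V}) : R :=
  \big[Rplus/R0]_(s : {ffun V -> option V} * {ffun V -> option V})
     (if pb (lp_outcome s.1 s.2 P0 N0 A B)
      then (sel_prob wp s.1 * sel_prob wn s.2)%R else R0).

End Defs.

(* Main.v *)
From HB Require Import structures.
From Stdlib Require Import Reals Lra ClassicalEpsilon.
Require Import Defs.
From mathcomp Require Import all_boot.
From mathcomp Require Import zify.

Set Implicit Arguments.
Unset Strict Implicit.
Unset Printing Implicit Defensive.

Lemma Rplus_assoc' : associative Rplus. Proof. by move=> *; rewrite Rplus_assoc. Qed.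
Lemma Rmult_assoc' : associative Rmult. Proof. by move=> *; rewrite Rmult_assoc. Qed.
HB.instance Definition _ := Monoid.isComLaw.Build R R0 Rplus Rplus_assoc' Rplus_comm Rplus_0_l.
HB.instance Definition _ := Monoid.isComLaw.Build R R1 Rmult Rmult_assoc' Rmult_comm Rmult_1_l.
HB.instance Definition _ := Monoid.isMulLaw.Build R R0 Rmult Rmult_0_l Rmult_0_r.
HB.instance Definition _ := Monoid.isAddLaw.Build R Rmult Rplus Rmult_plus_distr_r Rmult_plus_distr_l.

Section Iter.
Variable V : finType.
Variable G : V -> {set V} -> bool.
Variable S0 : {set V}.

Fixpoint iset (t : nat) : {set V} :=
  match t with 0 => S0 | t'.+1 => iset t' :|: [set v | G v (iset t')] end.

Definition NN := #|V|.+1.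

Lemma iset_sub s t : (s <= t)%N -> iset s \subset iset t.
Proof.
move=> /subnK <-; elim: (t - s) => [|d IH] //=.
by apply: subset_trans IH (subsetUl _ _).
Qed.

Lemma stab_ex : exists s, (s <= #|V|)%N /\ iset s.+1 = iset s.
Proof.
have H : forall s, (exists s', (s' < s)%N /\ iset s'.+1 = iset s') \/ (s <= #|iset s|)%N.
  elim=> [|s [IH|IH]]; first by right.
    by left; case: IH => s' [? ?]; exists s'; split=> //; lia.
  case: (eqVneq (iset s.+1) (iset s)) => E; first by left; exists s.
  right; have : iset s \proper iset s.+1.
    by rewrite properEneq eq_sym E /= subsetUl.
  by move/proper_card => ?; lia.
case: (H #|V|.+1) => [[s [? ?]]|]; first by exists s; split => //; lia.
by move=> /leq_trans /(_ (max_card _)); rewrite ltnn.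
Qed.

Lemma stab_from s d : iset s.+1 = iset s -> iset (d + s) = iset s.
Proof. move=> H; elim: d => // d IH; rewrite addSn /= IH; exact: H. Qed.

Lemma iset_stab t : (NN.-1 <= t)%N -> iset t = iset NN.-1.
Proof.
rewrite /NN /=; move=> Ht; case: stab_ex => s [Hs E].
rewrite -(subnK Ht) -(subnK Hs) addnA !stab_from //.
Qed.

Lemma isetS t : iset t.+1 = iset t :|: [set v | G v (iset t)]. Proof. by []. Qed.
Lemma NN_gt0 : (0 < NN)%N. Proof. by []. Qed.

Definition Tm v := count (fun t => v \notin iset t) (iota 0 NN).

Lemma Tm_le v : (Tm v <= NN)%N.
Proof. by rewrite /Tm; apply: leq_trans (count_size _ _) _; rewrite size_iota. Qed.

Lemma cnt_mono (b : nat -> bool) (mono : forall t, b t -> b t.+1) n :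
  forall t, (t < n)%N -> b t = (count (fun t => ~~ b t) (iota 0 n) <= t)%N.
Proof.
have mono_le : forall s t, (s <= t)%N -> b s -> b t.
  move=> s t /subnK <-; elim: (t - s) => // d IH /IH; exact: mono.
elim: n => [//|n IH] t Ht.
have cle : (count (fun t => ~~ b t) (iota 0 n) <= n)%N.
  by apply: leq_trans (count_size _ _) _; rewrite size_iota.
rewrite -addn1 iotaD count_cat /= add0n addn0.
case bn: (b n) => /=.
  rewrite addn0; case: (ltnP t n) => tn; first exact: IH.
  have -> : t = n by lia.
  by rewrite bn cle.
have nb : forall t, (t <= n)%N -> b t = false.
  by move=> t' /mono_le H; apply/negP => /H; rewrite bn.
have cn : count (fun t => ~~ b t) (iota 0 n) = n.
  case: n {IH cle Ht bn nb mono_le} (IH) (cle) (nb) => // n IH cle nb.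
  have := IH n (ltnSn _); rewrite nb // => /esym/negbT; rewrite -ltnNge; lia.
rewrite cn nb; [lia | lia].
Qed.

Lemma mem_iset_lt t v : (t < NN)%N -> (v \in iset t) = (Tm v <= t)%N.
Proof.
apply: (@cnt_mono (fun t => v \in iset t)).
by move=> t' /=; rewrite inE => ->.
Qed.

Lemma mem_iset t v : (v \in iset t) = (Tm v <= t)%N && (Tm v < NN)%N.
Proof.
case: (ltnP t NN) => Ht.
  rewrite mem_iset_lt //; case: (leqP (Tm v) t) => h //=; apply/esym/idP; lia.
rewrite iset_stab; last by lia.
have NN0 : (0 < NN)%N by [].
rewrite mem_iset_lt; last by lia.
have := Tm_le v => h.
have -> : (Tm v <= t)%N by lia.
by apply/idP/idP; lia.
Qed.

Lemma first_iff v t : (v \in iset t /\ forall s, (s < t)%N -> v \notin iset s) <->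
   (Tm v = t /\ (t < NN)%N).
Proof.
split.
  case; rewrite mem_iset => /andP [h1 h2] H.
  case: (ltnP (Tm v) t) => h3; last by split => //; lia.
  by have := H _ h3; rewrite mem_iset leqnn h2.
case=> <- h; rewrite mem_iset leqnn h; split=> // s hs.
by rewrite mem_iset; case: leqP => //; lia.
Qed.

Lemma never_iff v : (forall t, v \notin iset t) <-> Tm v = NN.
Proof.
split.
  move=> H; have := H (Tm v); rewrite mem_iset leqnn /= => /negbTE h.
  have := Tm_le v; move: h; case: ltngtP => //.
by move=> h t; rewrite mem_iset h ltnn andbF.
Qed.

Hypothesis Gmono : forall v (A B : {set V}), A \subset B -> G v A -> G v B.
Hypothesis G0 : forall v, G v set0 = false.

Definition Yf (f : V -> nat) t := [set u | (f u <= t)%N && (f u < NN)%N].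
Definition condf (f : V -> nat) v :=
  if f v == 0 then v \in S0 else (v \notin S0) &&
   (if f v == NN then ~~ G v [set u | (f u < NN)%N]
    else G v [set u | (f u < f v)%N] && ~~ G v [set u | (f u < (f v).-1)%N]).

Lemma uniq_T (f : V -> nat) : (forall v, f v <= NN)%N ->
  (forall t, iset t = Yf f t) <-> (forall v, Tm v = f v).
Proof.
move=> fle; split; last first.
  by move=> H t; apply/setP => u; rewrite inE mem_iset H.
move=> H v.
have E t : ((Tm v <= t) && (Tm v < NN))%N = ((f v <= t) && (f v < NN))%N.
  by rewrite -mem_iset H inE.
have := E (Tm v); have := E (f v); have := Tm_le v; have := fle v.
rewrite !leqnn /=.
case: (ltngtP (Tm v) (f v)) => //; case: ltnP => //; case: ltnP => //= *; lia.
Qed.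

Lemma char (f : V -> nat) : (forall v, f v <= NN)%N ->
  (forall t, iset t = Yf f t) <-> (forall v, condf f v).
Proof.
move=> fle; split.
  move=> H v.
  have m t : (v \in iset t) = (f v <= t)%N && (f v < NN)%N by rewrite H inE.
  have S0e : (v \in S0) = (f v == 0).
    by have := m 0; rewrite /= => ->; have := NN_gt0; case: (f v).
  rewrite /condf S0e; case: eqP => // fv0 /=.
  case: eqP => fvN.
    have NN0 := NN_gt0.
    have := m NN.-1.+1; rewrite fvN (_ : (NN < NN.-1.+1)%N = false); last by apply/negbTE; lia.
    rewrite andbF isetS => /negbT; rewrite inE negb_or => /andP [_].
    rewrite inE; apply: contra => Hg.
    by rewrite H; apply: Gmono Hg; apply/subsetP => u; rewrite !inE; lia.
  have fvlt : (f v < NN)%N by have := fle v; lia.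
  have m1 := m (f v).-1.+1; have m0 := m (f v).-1.
  rewrite isetS inE (_ : (f v).-1.+1 = f v) in m1; last lia.
  have fe : (f v <= (f v).-1)%N = false by apply/negbTE; lia.
  move: m1; rewrite m0 leqnn fvlt fe /= inE => Hg.
  have e1 : iset (f v).-1 = [set u | (f u < f v)%N].
    by rewrite H; apply/setP => u; rewrite !inE; lia.
  rewrite -e1 Hg /=.
  case e : (f v).-1 => [|s].
    have -> : [set u | (f u < 0)%N] = set0 by apply/setP => u; rewrite !inE.
    by rewrite G0.
  have := m s.+1; rewrite isetS inE -e fe andFb => /negbT; rewrite negb_or inE => /andP [_].
  have -> : iset s = [set u | (f u < s.+1)%N].
    by rewrite H; apply/setP => u; rewrite !inE; lia.
  by rewrite e.
move=> C; elim=> [|t IH].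
  apply/setP => v; rewrite /= !inE; have := C v; rewrite /condf.
  case: eqP => [-> //|fv0].
  by case/andP => /negbTE ->; case: (f v) fv0.
rewrite /= IH; apply/setP => v; rewrite !inE.
have := C v; rewrite /condf.
case: eqP => [-> //|fv0].
case/andP => _; case: eqP => [fvN|fvN].
  rewrite fvN ltnn !andbF /= => Hn; apply/negP => Hg; move/negP: Hn; apply.
  by apply: Gmono Hg; apply/subsetP => u; rewrite !inE; lia.
case/andP => g1 g2.
have fvlt : (f v < NN)%N by have := fle v; lia.
rewrite fvlt !andbT.
case: (ltngtP (f v) t.+1) => h.
- by have -> : (f v <= t)%N by lia.
- have -> : (f v <= t)%N = false by lia.
  apply/negP => Hg; move/negP: g2; apply.
  by apply: Gmono Hg; apply/subsetP => u; rewrite !inE; lia.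
  apply/orP; right.
  have -> : Yf f t = [set u | (f u < f v)%N].
    by apply/setP => u; rewrite !inE; lia.
  done.
Qed.

End Iter.

Local Open Scope R_scope.

Definition ind (b : bool) : R := if b then 1 else 0.
Definition rleb (x y : R) : bool := if Rle_dec x y then true else false.
Lemma rlebP x y : reflect (x <= y) (rleb x y).
Proof. by rewrite /rleb; case: Rle_dec => H; constructor. Qed.

Lemma cv_const c : Un_cv (fun _ => c) c.
Proof. move=> e he; exists 0%nat => n _; rewrite /R_dist Rminus_diag Rabs_R0; lra. Qed.

Lemma cv_by_bound (u : nat -> R) l :
  (forall k, Rabs (u k - l) <= / INR k.+1) -> Un_cv u l.
Proof.
move=> H e he; case: (@archimed_cor1 e he) => N [hN N0].
exists N => n hn; rewrite /R_dist; apply: Rle_lt_trans (H n) _.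
apply: Rle_lt_trans hN; apply: Rinv_le_contravar; first by apply: lt_0_INR; lia.
apply: le_INR; lia.
Qed.

Lemma big_ord_recrR n (F : 'I_n.+1 -> R) :
  \big[Rplus/0]_(i < n.+1) F i = \big[Rplus/0]_(i < n) F (widen_ord (leqnSn n) i) + F ord_max.
Proof. exact: big_ord_recr. Qed.

Definition cntle (n : nat) (x : R) := \big[Rplus/0]_(i < n) ind (rleb (INR i.+1) x).

Lemma cnt_bound n x : 0 <= x ->
  cntle n x <= x /\ cntle n x <= INR n /\ (cntle n x = INR n \/ x < cntle n x + 1).
Proof.
move=> x0; elim: n => [|n IH].
  by rewrite /cntle big_ord0 /=; lra.
rewrite /cntle big_ord_recrR (eq_bigr (fun i : 'I_n => ind (rleb (INR i.+1) x))) // -/(cntle n x); change (nat_of_ord (@ord_max n)) with n; rewrite S_INR.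
case: IH => h1 [h2 h3].
rewrite /ind; case: rlebP => h.
  case: h3 => h3; last by (have : INR n.+1 <= INR n + 1 by rewrite S_INR; lra); lra.
  lra.
lra.
Qed.

Lemma sum_ind_split (n : nat) (P Q : 'I_n -> bool) :
  (forall i, Q i -> P i) ->
  \big[Rplus/0]_(i < n) ind (P i) =
  \big[Rplus/0]_(i < n) ind (P i && ~~ Q i) + \big[Rplus/0]_(i < n) ind (Q i).
Proof.
move=> QP; rewrite -big_split /=; apply: eq_bigr => i _.
move: (QP i); case: (P i); case: (Q i) => //= H; rewrite /ind /=; try lra.
by have := H isT.
Qed.

Lemma cntg_eq n c : (0 < n)%nat ->
  \big[Rplus/0]_(i < n) ind (rleb (grid_pt i) c) = cntle n (c * INR n).
Proof.
move=> n0; apply: eq_bigr => i _; congr ind.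
have hn : 0 < INR n by apply: lt_0_INR; lia.
rewrite /grid_pt.
have e : INR i.+1 / INR n * INR n = INR i.+1 by field; lra.
move: e; set q := INR i.+1 / INR n => e.
apply/rlebP/rlebP => h.
  by rewrite -e; apply: Rmult_le_compat_r; lra.
by nra.
Qed.

Lemma cv_interval a b : 0 <= a -> a <= b -> b <= 1 ->
  Un_cv (fun k => \big[Rplus/0]_(i < k.+1)
            ind (rleb (grid_pt i) b && ~~ rleb (grid_pt i) a) / INR k.+1) (b - a).
Proof.
move=> a0 ab b1; apply: cv_by_bound => k.
have hn : 0 < INR k.+1 by apply: lt_0_INR; lia.
have QP : forall i : 'I_k.+1, rleb (grid_pt i) a -> rleb (grid_pt i) b.
  move=> i /rlebP h; apply/rlebP; lra.
have := sum_ind_split QP; rewrite !cntg_eq //.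
have [ha1 [ha2 ha3]] := cnt_bound k.+1 (Rmult_le_pos _ _ a0 (Rlt_le _ _ hn)).
have [hb1 [hb2 hb3]] := cnt_bound k.+1 (Rmult_le_pos _ _ (Rle_trans _ _ _ a0 ab) (Rlt_le _ _ hn)).
set Sa := cntle _ (a * _) in ha1 ha2 ha3 *.
set Sb := cntle _ (b * _) in hb1 hb2 hb3 *.
set S := \big[Rplus/0]_(i < k.+1) _ => HS.
have ha4 : a * INR k.+1 < Sa + 1.
  by case: ha3 => [->|//]; nra.
have hb4 : b * INR k.+1 < Sb + 1.
  by case: hb3 => [->|//]; nra.
have -> : S / INR k.+1 - (b - a) = (S - (b - a) * INR k.+1) / INR k.+1.
  by field; lra.
have hX : -1 <= S - (b - a) * INR k.+1 <= 1 by nra.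
have hy : 0 < / INR k.+1 by apply: Rinv_0_lt_compat.
move: hX hy; rewrite /Rdiv; set X := S - _; set y := / INR k.+1 => hX hy.
apply: Rabs_le; nra.
Qed.

Lemma Un_cv_ext (u v : nat -> R) l : (forall k, u k = v k) -> Un_cv u l -> Un_cv v l.
Proof. by move=> E H e he; case: (H e he) => N HN; exists N => n hn; rewrite -E; apply: HN. Qed.

Lemma cv_sum (T : Type) (r : seq T) (F : nat -> T -> R) (l : T -> R) :
  (forall i, Un_cv (fun k => F k i) (l i)) ->
  Un_cv (fun k => \big[Rplus/0]_(i <- r) F k i) (\big[Rplus/0]_(i <- r) l i).
Proof.
move=> H; elim: r => [|i r IH].
  by rewrite big_nil; apply: (Un_cv_ext _ (cv_const 0)) => k; rewrite big_nil.
rewrite big_cons; apply: (Un_cv_ext _ (CV_plus _ _ _ _ (H i) IH)) => k.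
by rewrite big_cons.
Qed.

Lemma cv_prod (T : Type) (r : seq T) (F : nat -> T -> R) (l : T -> R) :
  (forall i, Un_cv (fun k => F k i) (l i)) ->
  Un_cv (fun k => \big[Rmult/1]_(i <- r) F k i) (\big[Rmult/1]_(i <- r) l i).
Proof.
move=> H; elim: r => [|i r IH].
  by rewrite big_nil; apply: (Un_cv_ext _ (cv_const 1)) => k; rewrite big_nil.
rewrite big_cons; apply: (Un_cv_ext _ (CV_mult _ _ _ _ (H i) IH)) => k.
by rewrite big_cons.
Qed.

Lemma cv_scal c (u : nat -> R) l : Un_cv u l -> Un_cv (fun k => c * u k) (c * l).
Proof. move=> H; exact: (CV_mult _ _ _ _ (cv_const c) H). Qed.

Lemma prod_ind (I : finType) (P : pred I) :
  \big[Rmult/1]_i ind (P i) = ind [forall i, P i].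
Proof.
case: forallP => [H|].
  by rewrite big1 // => i _; rewrite H.
move/forallP; rewrite negb_forall => /existsP [i Hi].
by rewrite (bigD1 i) //= /ind (negbTE Hi) Rmult_0_l.
Qed.

Lemma sum_prod_ffun (I J : finType) (P : I -> J -> bool) (F : I -> J -> R) :
  \big[Rplus/0]_(g : {ffun I -> J}) (ind [forall i, P i (g i)] * \big[Rmult/1]_i F i (g i))
  = \big[Rmult/1]_i \big[Rplus/0]_j (ind (P i j) * F i j).
Proof.
rewrite bigA_distr_bigA; apply: eq_bigr => g _.
by rewrite big_split /= prod_ind.
Qed.

Lemma sum_fiber (X Y : finType) (a : X -> Y) (p : X -> R) (F : Y -> R) :
  \big[Rplus/0]_x (F (a x) * p x) =
  \big[Rplus/0]_y (F y * \big[Rplus/0]_x (ind (a x == y) * p x)).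
Proof.
rewrite (partition_big a xpredT) //=; apply: eq_bigr => y _.
rewrite big_distrr /= big_mkcond; apply: eq_bigr => x _.
rewrite /ind; case: eqP => [->|_] /=; lra.
Qed.

Lemma sum_fiber2 (X1 X2 Y1 Y2 : finType) (a : X1 -> Y1) (b : X2 -> Y2)
   (p1 : X1 -> R) (p2 : X2 -> R) (F : Y1 -> Y2 -> R) :
  \big[Rplus/0]_(x : X1 * X2) (F (a x.1) (b x.2) * (p1 x.1 * p2 x.2)) =
  \big[Rplus/0]_y1 \big[Rplus/0]_y2 (F y1 y2 *
     (\big[Rplus/0]_x (ind (a x == y1) * p1 x) * \big[Rplus/0]_x (ind (b x == y2) * p2 x))).
Proof.
rewrite -(pair_bigA _ (fun x1 x2 => F (a x1) (b x2) * (p1 x1 * p2 x2))) /=.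
transitivity (\big[Rplus/0]_x1 ((fun y1 => \big[Rplus/0]_x2 (F y1 (b x2) * p2 x2)) (a x1) * p1 x1)).
  apply: eq_bigr => x1 _ /=; rewrite big_distrl /=; apply: eq_bigr => x2 _; lra.
rewrite (sum_fiber a p1 (fun y1 => \big[Rplus/0]_x2 (F y1 (b x2) * p2 x2))).
apply: eq_bigr => y1 _ /=.
rewrite (sum_fiber b p2 (F y1)) big_distrl /=; apply: eq_bigr => y2 _; lra.
Qed.

Lemma card_ind (X : finType) (P : pred X) :
  INR #|[set x | P x]| = \big[Rplus/0]_x ind (P x).
Proof.
rewrite -sum1_card (big_morph INR plus_INR (erefl (INR 0))) big_mkcond /=.
by apply: eq_bigr => x _; rewrite inE /ind; case: (P x).
Qed.

Lemma sum_option (X : finType) (x0 : X) (F : option X -> R) :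
  \big[Rplus/0]_o F o = F None + \big[Rplus/0]_x F (Some x).
Proof.
rewrite (bigD1 None) //=; congr (_ + _).
rewrite (reindex_onto Some (odflt x0)) /=; last by case.
by apply: eq_bigl => x; rewrite eqxx.
Qed.

Section Insum.
Variable V : finType.
Variable w : V -> V -> R.
Hypothesis hw : forall u v, 0 <= w u v.
Hypothesis hw1 : forall v, insum w [set: V] v <= 1.

Lemma insumE (S : {set V}) v : insum w S v = \big[Rplus/0]_u (ind (u \in S) * w u v).
Proof.
rewrite /insum big_mkcond /=; apply: eq_bigr => u _; rewrite /ind; case: (u \in S); lra.
Qed.

Lemma sum_ge0 (F : V -> R) : (forall u, 0 <= F u) -> 0 <= \big[Rplus/0]_u F u.
Proof. move=> H; apply: (big_ind (fun x => 0 <= x)) => //; [lra | move=> *; lra]. Qed.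

Lemma insum_split (S T : {set V}) v : T \subset S ->
  insum w S v = insum w T v + \big[Rplus/0]_u (ind ((u \in S) && (u \notin T)) * w u v).
Proof.
move=> /subsetP TS; rewrite !insumE -big_split /=; apply: eq_bigr => u _.
move: (TS u); rewrite /ind; case: (u \in S); case: (u \in T) => //= H; try lra.
by have := H isT.
Qed.

Lemma insum_ge0 S v : 0 <= insum w S v.
Proof. rewrite insumE; apply: sum_ge0 => u; rewrite /ind; case: (u \in S); have := hw u v; lra. Qed.

Lemma insum_mono (S T : {set V}) v : T \subset S -> insum w T v <= insum w S v.
Proof.
move=> H; rewrite (insum_split v H).
have : 0 <= \big[Rplus/0]_u (ind ((u \in S) && (u \notin T)) * w u v).
  by apply: sum_ge0 => u; rewrite /ind; case: (_ && _); have := hw u v; lra.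
lra.
Qed.

Lemma insum_le1 S v : insum w S v <= 1.
Proof. apply: Rle_trans (hw1 v); apply: insum_mono; exact: subsetT. Qed.

End Insum.


Local Close Scope R_scope.

Lemma link (n : nat) (tis1 tis2 : nat -> Prop) (ti1 ti2 : Prop) (T1 T2 : nat) :
  (T1 <= n)%N -> (T2 <= n)%N ->
  (forall t, tis1 t <-> T1 = t /\ (t < n)%N) -> (ti1 <-> T1 = n) ->
  (forall t, tis2 t <-> T2 = t /\ (t < n)%N) -> (ti2 <-> T2 = n) ->
  ((exists t, tis1 t /\ (ti2 \/ exists t', tis2 t' /\ (t < t')%N)) <->
      (T1 < n)%N && (T1 < T2)%N) /\
  ((exists t', tis2 t' /\ (ti1 \/ exists t, tis1 t /\ (t' <= t)%N)) <->
      (T2 < n)%N && (T2 <= T1)%N).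
Proof.
move=> h1 h2 e1 i1 e2 i2; split; split.
- case=> t [/e1 [<- lt] [/i2 ->| [t' [/e2 [<- _] h]]]]; apply/andP; split => //; lia.
- case/andP => a b; exists T1; split; first by apply/e1.
  case: (ltngtP T2 n) => c; [right; exists T2; split => //; exact/e2 | lia | by left; apply/i2].
- case=> t [/e2 [<- lt] [/i1 ->| [t' [/e1 [<- _] h]]]]; apply/andP; split => //; lia.
- case/andP => a b; exists T2; split; first by apply/e2.
  case: (ltngtP T1 n) => c; [right; exists T1; split => //; exact/e1 | lia | by left; apply/i1].
Qed.

Section Main.
Variable V : finType.

Definition TF := {ffun V -> 'I_(NN V).+1}.

Definition OutF (A B : {set V}) (f g : TF) : bool :=
  [forall v, (v \in A == (f v < NN V)%N && (f v < g v)%N) &&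
             (v \in B == (g v < NN V)%N && (g v <= f v)%N)].

Lemma out_link (Pl Mi : V -> Prop) (f g : TF) (A B : {set V}) :
  (forall v, Pl v <-> (f v < NN V)%N && (f v < g v)%N) ->
  (forall v, Mi v <-> (g v < NN V)%N && (g v <= f v)%N) ->
  ((forall v, (v \in A <-> Pl v) /\ (v \in B <-> Mi v)) <-> OutF A B f g).
Proof.
move=> hP hM; split.
  move=> H; apply/forallP => v; case: (H v) => [ha hb].
  apply/andP; split; apply/eqP; apply/idP/idP.
  - by move/ha/hP.
  - by move/hP/ha.
  - by move/hb/hM.
  - by move/hM/hb.
move/forallP => H v; have /andP [/eqP ea /eqP eb] := H v; split.
  by rewrite ea hP.
by rewrite eb hM.
Qed.

Definition Tof (G : V -> {set V} -> bool) (S0 : {set V}) : TF :=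
  [ffun v => inord (Tm G S0 v)].

Lemma TofE G S0 v : (Tof G S0 v : nat) = Tm G S0 v.
Proof. by rewrite ffunE inordK // ltnS Tm_le. Qed.

Lemma Tm_le_Tof G S0 v : (Tof G S0 v <= NN V)%N.
Proof. by rewrite TofE Tm_le. Qed.

Definition Glt (w : V -> V -> R) (th : V -> R) (v : V) (S : {set V}) : bool :=
  rleb (th v) (insum w S v).

Lemma lt_set_iset w th S0 t : lt_set w th S0 t = iset (Glt w th) S0 t.
Proof. by elim: t => //= t ->. Qed.

Definition go (o : option V) (S : {set V}) : bool := if o is Some u then u \in S else false.
Definition Gsel (sel : {ffun V -> option V}) (v : V) (S : {set V}) : bool := go (sel v) S.

Lemma path_iset sel S0 t v :
  v \in iset (Gsel sel) S0 t <-> exists d, (d <= t)%N /\ path_len sel S0 d v.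
Proof.
elim: t v => [|t IH] v /=.
  split; first by move=> h; exists 0.
  case=> d [d0 h]; have e : d = 0 by lia.
  by subst d.
rewrite in_setU inE /Gsel /go; split.
  case/orP => [/IH [d [hd h]]|]; first by exists d; split=> //; lia.
  case e: (sel v) => [u|] // /IH [d [hd h]]; exists d.+1; split => //.
  by exists u.
case=> d [hd h]; case: (ltnP d t.+1) => hd'.
  by apply/orP; left; apply/IH; exists d; split => //; lia.
have e : d = t.+1 by lia. subst d.
case: h => u [e h]; rewrite e; apply/orP; right; apply/IH; exists t; split => //.
Qed.

Lemma tau_link w th S0 v :
  (forall t, tau_is w th S0 v t <-> Tof (Glt w th) S0 v = t :> nat /\ (t < NN V)%N) /\
  (tau_inf w th S0 v <-> Tof (Glt w th) S0 v = NN V :> nat).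
Proof.
rewrite TofE; split.
  move=> t; rewrite -first_iff /tau_is; split; case=> a b.
    by split; [rewrite -lt_set_iset | move=> s hs; rewrite -lt_set_iset; apply: b].
  by split; [rewrite lt_set_iset | move=> s hs; rewrite lt_set_iset; apply: b].
rewrite -never_iff /tau_inf; split=> h t; [rewrite -lt_set_iset | rewrite lt_set_iset]; apply: h.
Qed.

Lemma dist_link sel S0 v :
  (forall d, dist_is sel S0 v d <-> Tof (Gsel sel) S0 v = d :> nat /\ (d < NN V)%N) /\
  (dist_inf sel S0 v <-> Tof (Gsel sel) S0 v = NN V :> nat).
Proof.
rewrite TofE; split.
  move=> d; rewrite -first_iff /dist_is; split.
    case=> h1 h2; split; first by apply/path_iset; exists d.
    move=> s hs; apply/negP => /path_iset [e [he pe]]; apply: (h2 e) => //; lia.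
  case=> /path_iset [e [he pe]] h2.
  have ed : e = d.
    case: (ltnP e d) => c; last lia.
    by have := h2 e c; rewrite (_ : v \in _) //; apply/path_iset; exists e.
  subst e; split => // d' hd' pd'; have := h2 d' hd'.
  by apply/negP; rewrite negbK; apply/path_iset; exists d'.
rewrite -never_iff /dist_inf; split.
  by move=> h t; apply/negP => /path_iset [e [_ pe]]; apply: (h e).
by move=> h d pd; have := h d; apply/negP; rewrite negbK; apply/path_iset; exists d.
Qed.

Lemma clt_outE wp wn thp thn P0 N0 A B :
  clt_outcome wp wn thp thn P0 N0 A B <->
  OutF A B (Tof (Glt wp thp) P0) (Tof (Glt wn thn) N0).
Proof.
have H v := link (Tm_le_Tof (Glt wp thp) P0 v) (Tm_le_Tof (Glt wn thn) N0 v)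
   (tau_link wp thp P0 v).1 (tau_link wp thp P0 v).2
   (tau_link wn thn N0 v).1 (tau_link wn thn N0 v).2.
apply: out_link => v; [exact: (H v).1 | exact: (H v).2].
Qed.

Lemma lp_outE sp sn P0 N0 A B :
  lp_outcome sp sn P0 N0 A B <->
  OutF A B (Tof (Gsel sp) P0) (Tof (Gsel sn) N0).
Proof.
have H v := link (Tm_le_Tof (Gsel sp) P0 v) (Tm_le_Tof (Gsel sn) N0 v)
   (dist_link sp P0 v).1 (dist_link sp P0 v).2
   (dist_link sn N0 v).1 (dist_link sn N0 v).2.
apply: out_link => v; [exact: (H v).1 | exact: (H v).2].
Qed.

Lemma Tof_eq (G : V -> {set V} -> bool) S0
  (Gmono : forall v (A B : {set V}), A \subset B -> G v A -> G v B)
  (G0 : forall v, G v set0 = false) (f : TF) :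
  (Tof G S0 == f) = [forall v, condf G S0 (fun u => (f u : nat)) v].
Proof.
have fle : forall v, ((f v : nat) <= NN V)%N by move=> v; rewrite -ltnS ltn_ord.
have key := iff_trans (iff_sym (uniq_T G S0 fle)) (char S0 Gmono G0 fle).
apply/eqP/forallP.
  by move=> e; apply/key => v; rewrite -e TofE.
move/key => H; apply/ffunP => v; apply/val_inj => /=; by rewrite TofE.
Qed.

Local Open Scope R_scope.

Definition wt (w : V -> V -> R) v (o : option V) : R :=
  match o with Some u => w u v | None => 1 - insum w [set: V] v end.

Definition condx w S0 (f : V -> nat) v (x : R) :=
  condf (fun v' S => rleb x (insum w S v')) S0 f v.
Definition condo S0 (f : V -> nat) v (o : option V) :=
  condf (fun v' S => go o S) S0 f v.

Lemma grid_le1 k (i : 'I_k.+1) : grid_pt i <= 1.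
Proof.
have hn : 0 < INR k.+1 by apply: lt_0_INR; lia.
have : INR i.+1 <= INR k.+1 by apply: le_INR; have := ltn_ord i; lia.
rewrite /grid_pt => h; apply: (Rmult_le_reg_r (INR k.+1)) => //.
rewrite /Rdiv Rmult_assoc Rinv_l; lra.
Qed.

Lemma sum_const_ord n (c : R) : \big[Rplus/0]_(i < n) c = INR n * c.
Proof.
elim: n => [|n IH]; first by rewrite big_ord0 /=; lra.
by rewrite big_ord_recrR IH S_INR; lra.
Qed.

Lemma per_v w (hw : forall u v, 0 <= w u v) (hw1 : forall v, insum w [set: V] v <= 1)
   S0 (f : V -> nat) v :
  Un_cv (fun k => (\big[Rplus/0]_(i < k.+1) (ind (condx w S0 f v (grid_pt i)) * 1)) / INR k.+1)
        (\big[Rplus/0]_o (ind (condo S0 f v o) * wt w v o)).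
Proof.
have sumc : forall k (c : bool), \big[Rplus/0]_(i < k.+1) (ind c * 1) / INR k.+1 = ind c.
  move=> k c; rewrite sum_const_ord; have : 0 < INR k.+1 by apply: lt_0_INR; lia.
  by move=> h; field; lra.
have insT : insum w [set: V] v = \big[Rplus/0]_u w u v.
  by rewrite insumE; apply: eq_bigr => u _; rewrite inE /ind; lra.
have opt1 : \big[Rplus/0]_o wt w v o = 1.
  by rewrite (sum_option v) /= -insT; lra.
rewrite /condx /condo /condf.
case: eqP => fv0.
  have -> : \big[Rplus/0]_o (ind (v \in S0) * wt w v o) = ind (v \in S0).
    by rewrite -big_distrr /= opt1 Rmult_1_r.
  by apply: (Un_cv_ext _ (cv_const _)) => k; rewrite sumc.
case: (boolP (v \in S0)) => hv.
  rewrite [~~ true]/= ?andFb.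
  have -> : \big[Rplus/0]_o (ind false * wt w v o) = 0.
    by rewrite big1 // => o _; rewrite /ind Rmult_0_l.
  by apply: (Un_cv_ext _ (cv_const _)) => k; rewrite sumc.
rewrite [~~ false]/= ?andTb.
case: eqP => fvN.
  set a := insum w [set u | (f u < NN V)%N] v.
  have a0 : 0 <= a by apply: insum_ge0.
  have a1 : a <= 1 by apply: insum_le1.
  have -> : \big[Rplus/0]_o (ind (~~ go o [set u | (f u < NN V)%N]) * wt w v o) = 1 - a.
    rewrite (sum_option v) /= /ind /= Rmult_1_l.
    rewrite (insum_split w v (subsetT [set u | (f u < NN V)%N])) -/a.
    have -> : \big[Rplus/0]_u ((if u \notin [set u | (f u < NN V)%N] then 1 else 0) * w u v)
      = \big[Rplus/0]_u ((if (u \in [set: V]) && (u \notin [set u | (f u < NN V)%N]) then 1 else 0) * w u v).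
      by apply: eq_bigr => u _; rewrite in_setT.
    rewrite /ind; lra.
  apply: (Un_cv_ext _ (cv_interval a0 a1 (Rle_refl 1))) => k.
  congr (_ / _); apply: eq_bigr => i _; rewrite Rmult_1_r; congr ind.
  by rewrite (_ : rleb (grid_pt i) 1 = true) //; apply/rlebP; apply: grid_le1.
set b := insum w [set u | (f u < f v)%N] v.
set a := insum w [set u | (f u < (f v).-1)%N] v.
have sub : [set u | (f u < (f v).-1)%N] \subset [set u | (f u < f v)%N].
  by apply/subsetP => u; rewrite !inE; lia.
have a0 : 0 <= a by apply: insum_ge0.
have ab : a <= b by apply: insum_mono.
have b1 : b <= 1 by apply: insum_le1.
have -> : \big[Rplus/0]_o (ind (go o [set u | (f u < f v)%N] &&
             ~~ go o [set u | (f u < (f v).-1)%N]) * wt w v o) = b - a.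
  rewrite (sum_option v) /= /ind /= Rmult_0_l Rplus_0_l.
  rewrite /b (insum_split w v sub) -/a /ind; lra.
apply: (Un_cv_ext _ (cv_interval a0 ab b1)) => k.
by congr (_ / _); apply: eq_bigr => i _; rewrite Rmult_1_r.
Qed.

Lemma Glt_mono w (hw : forall u v, 0 <= w u v) th v (A B : {set V}) :
  A \subset B -> Glt w th v A -> Glt w th v B.
Proof.
move=> sub /rlebP h; apply/rlebP; apply: Rle_trans h _; exact: insum_mono.
Qed.

Lemma grid_pos k (i : 'I_k.+1) : 0 < grid_pt i.
Proof.
rewrite /grid_pt; apply: Rdiv_lt_0_compat; apply: lt_0_INR; lia.
Qed.

Lemma grid_count w (hw : forall u v, 0 <= w u v) S0 (f : TF) k :
  \big[Rplus/0]_(x : {ffun V -> 'I_k.+1})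
      (ind (Tof (Glt w (fun v => grid_pt (x v))) S0 == f) * 1)
  = \big[Rmult/1]_v \big[Rplus/0]_(i < k.+1)
      (ind (condx w S0 (fun u => (f u : nat)) v (grid_pt i)) * 1).
Proof.
rewrite -(sum_prod_ffun (fun v (i : 'I_k.+1) => condx w S0 (fun u => (f u : nat)) v (grid_pt i))
                        (fun _ _ => 1)).
apply: eq_bigr => x _; rewrite big1 // Tof_eq //.
- by move=> v A B; apply: Glt_mono.
- move=> v; apply/rlebP; rewrite /insum big_set0; exact: Rlt_not_le (grid_pos (x v)).
Qed.

Lemma sel_count w S0 (f : TF) :
  \big[Rplus/0]_(s : {ffun V -> option V}) (ind (Tof (Gsel s) S0 == f) * sel_prob w s)
  = \big[Rmult/1]_v \big[Rplus/0]_o (ind (condo S0 (fun u => (f u : nat)) v o) * wt w v o).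
Proof.
rewrite -(sum_prod_ffun (fun v o => condo S0 (fun u => (f u : nat)) v o) (fun v o => wt w v o)).
apply: eq_bigr => s _; rewrite Tof_eq //.
- by move=> v A B /subsetP sub; rewrite /Gsel /go; case: (s v) => // u /sub.
- by move=> v; rewrite /Gsel /go; case: (s v) => // u; rewrite in_set0.
Qed.

Lemma prod_const (c : R) : \big[Rmult/1]_(v : V) c = c ^ #|V|.
Proof. rewrite big_const; elim: #|V| => //= m ->; lra. Qed.

Lemma prod_div (a b : V -> R) :
  \big[Rmult/1]_v (a v / b v) = (\big[Rmult/1]_v a v) / (\big[Rmult/1]_v b v).
Proof.
rewrite /Rdiv big_split /=; congr (_ * _).
by rewrite (big_morph Rinv Rinv_mult Rinv_1).
Qed.

End Main.

Lemma pbE (P : Prop) (b : bool) : (P <-> b) -> pb P = b.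
Proof.
move=> h; rewrite /pb; case: excluded_middle_informative => H.
  by apply/esym; apply/h.
by case: b h => // h; case: H; apply/h.
Qed.


Local Open Scope R_scope.

Lemma arith4 (a x y c : R) : a * (x * / c * (y * / c)) = a * (x * y) * (/ c * / c).
Proof. ring. Qed.

Theorem lemma1 (V : finType) (E : rel V) (wp wn : V -> V -> R)
  (P0 N0 : {set V}) :
  valid_weights E wp -> valid_weights E wn -> [disjoint P0 & N0] ->
  forall A B : {set V},
    Un_cv (clt_grid_freq wp wn P0 N0 A B) (lp_prob wp wn P0 N0 A B).
Proof.
move=> [hwp [_ hwp1]] [hwn [_ hwn1]] _ A B.
have Hlim : lp_prob wp wn P0 N0 A B =
  \big[Rplus/0]_(f : TF V) \big[Rplus/0]_(g : TF V) (ind (OutF A B f g) *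
     (\big[Rmult/1]_v \big[Rplus/0]_o (ind (condo P0 (fun u => (f u : nat)) v o) * wt wp v o) *
      \big[Rmult/1]_v \big[Rplus/0]_o (ind (condo N0 (fun u => (g u : nat)) v o) * wt wn v o))).
  rewrite /lp_prob.
  transitivity (\big[Rplus/0]_(s : {ffun V -> option V} * {ffun V -> option V})
     (ind (OutF A B (Tof (Gsel s.1) P0) (Tof (Gsel s.2) N0)) * (sel_prob wp s.1 * sel_prob wn s.2))).
    apply: eq_bigr => s _; rewrite (pbE (lp_outE _ _ _ _ _ _)) /ind.
    by case: (OutF _ _ _ _); lra.
  rewrite (sum_fiber2 (fun x => Tof (Gsel x) P0) (fun x => Tof (Gsel x) N0)
                       (sel_prob wp) (sel_prob wn) (fun f g => ind (OutF A B f g))).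
  apply: eq_bigr => f _; apply: eq_bigr => g _.
  by rewrite !sel_count.
rewrite Hlim.
pose Pg (w : V -> V -> R) S0 (f : TF V) k v :=
  \big[Rplus/0]_(i < k.+1) (ind (condx w S0 (fun u => (f u : nat)) v (grid_pt i)) * 1) / INR k.+1.
apply: (@Un_cv_ext (fun k => \big[Rplus/0]_(f : TF V) \big[Rplus/0]_(g : TF V) (ind (OutF A B f g) *
     (\big[Rmult/1]_v Pg wp P0 f k v * \big[Rmult/1]_v Pg wn N0 g k v)))); last first.
  apply: cv_sum => f; apply: cv_sum => g; apply: cv_scal; apply: CV_mult.
    apply: cv_prod => v; rewrite /Pg; exact: (per_v hwp hwp1 P0 (fun u => (f u : nat)) v).
  apply: cv_prod => v; rewrite /Pg; exact: (per_v hwn hwn1 N0 (fun u => (g u : nat)) v).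
move=> k; rewrite /clt_grid_freq card_ind.
have E1 : \big[Rplus/0]_(th : {ffun V -> 'I_k.+1} * {ffun V -> 'I_k.+1})
    ind (pb (clt_outcome wp wn (fun v => grid_pt (th.1 v)) (fun v => grid_pt (th.2 v)) P0 N0 A B))
  = \big[Rplus/0]_(f : TF V) \big[Rplus/0]_(g : TF V) (ind (OutF A B f g) *
     (\big[Rmult/1]_v \big[Rplus/0]_(i < k.+1) (ind (condx wp P0 (fun u => (f u : nat)) v (grid_pt i)) * 1) *
      \big[Rmult/1]_v \big[Rplus/0]_(i < k.+1) (ind (condx wn N0 (fun u => (g u : nat)) v (grid_pt i)) * 1))).
  transitivity (\big[Rplus/0]_(th : {ffun V -> 'I_k.+1} * {ffun V -> 'I_k.+1})
     (ind (OutF A B (Tof (Glt wp (fun v => grid_pt (th.1 v))) P0)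
                    (Tof (Glt wn (fun v => grid_pt (th.2 v))) N0)) * (1 * 1))).
    apply: eq_bigr => th _; rewrite (pbE (clt_outE _ _ _ _ _ _ _ _)); lra.
  rewrite (sum_fiber2 (fun x : {ffun V -> 'I_k.+1} => Tof (Glt wp (fun v => grid_pt (x v))) P0)
                      (fun x : {ffun V -> 'I_k.+1} => Tof (Glt wn (fun v => grid_pt (x v))) N0)
                      (fun _ => 1) (fun _ => 1) (fun f g => ind (OutF A B f g))).
  apply: eq_bigr => f _; apply: eq_bigr => g _.
  by rewrite (grid_count hwp) (grid_count hwn).
rewrite E1.
have pw : INR k.+1 ^ (2 * #|V|) = (\big[Rmult/1]_(v : V) INR k.+1) * (\big[Rmult/1]_(v : V) INR k.+1).
  by rewrite prod_const -pow_add; congr (_ ^ _); lia.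
rewrite pw; set c := \big[Rmult/1]_(v : V) INR k.+1.
rewrite /Rdiv big_distrl /=; apply: eq_bigr => f _.
rewrite big_distrl /=; apply: eq_bigr => g _.
rewrite /Pg !prod_div -/c /Rdiv Rinv_mult.
exact: arith4.
Qed.
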